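(* If $S$ is a nondegenerate $n$-dimensional simplex with $S\subset B_n$, then $\xi(B_n;S)\ge n$, and $\xi(B_n;S)=n$ holds if and only if $S$ is a regular simplex inscribed into $B_n$. Consequently $\xi_n(B_n)=n$.
   Context: $B_n$ is the closed unit Euclidean ball in $\mathbb R^n$ centered at $0$. $\xi(B_n;S)$ is the minimal $\sigma\ge1$ with $B_n\subset\sigma S$, where $\sigma S$ is the homothetic image of $S$ with center at its center of gravity and ratio $\sigma$. $\xi_n(B_n)$ is the minimum of $\xi(B_n;S)$ over all nondegenerate $n$-dimensional simplices $S\subset B_n$. A simplex is inscribed into $B_n$ if all its vertices lie on the unit sphere. *)

(* Defs.v *)
From HB Require Import structures.
From mathcomp Require Import all_boot all_order all_algebra.
From mathcomp Require Import boolp classical_sets reals.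
Set Implicit Arguments. Unset Strict Implicit. Unset Printing Implicit Defensive.
Import Order.TTheory GRing.Theory Num.Theory.
Local Open Scope ring_scope.
Local Open Scope classical_set_scope.

Definition enorm (R : realType) (n : nat) (x : 'rV[R]_n) : R :=
  Num.sqrt (\sum_(i < n) (x ord0 i) ^+ 2).

Definition unit_ball (R : realType) (n : nat) : set 'rV[R]_n :=
  [set x | enorm x <= 1].

Definition simplex_hull (R : realType) (n : nat) (v : 'I_n.+1 -> 'rV[R]_n) : set 'rV[R]_n :=
  [set x | exists lam : 'I_n.+1 -> R,
     (forall i, 0 <= lam i) /\ \sum_i lam i = 1 /\ x = \sum_i lam i *: v i].

Definition nondeg_simplex (R : realType) (n : nat) (v : 'I_n.+1 -> 'rV[R]_n) : Prop :=
  \det (\matrix_(i < n) (v (lift ord0 i) - v ord0)) != 0.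

Definition centroid (R : realType) (n : nat) (v : 'I_n.+1 -> 'rV[R]_n) : 'rV[R]_n :=
  (n.+1%:R)^-1 *: \sum_i v i.

Definition homothetic (R : realType) (n : nat) (sigma : R) (v : 'I_n.+1 -> 'rV[R]_n)
  : set 'rV[R]_n :=
  [set centroid v + sigma *: (x - centroid v) | x in simplex_hull v].

Definition xi (R : realType) (n : nat) (v : 'I_n.+1 -> 'rV[R]_n) : R :=
  inf [set sigma : R | 1 <= sigma /\ @unit_ball R n `<=` homothetic sigma v].

Definition xi_n (R : realType) (n : nat) : R :=
  inf [set xi v | v in [set v : 'I_n.+1 -> 'rV[R]_n |
                          nondeg_simplex v /\ simplex_hull v `<=` @unit_ball R n]].

Definition regular_simplex (R : realType) (n : nat) (v : 'I_n.+1 -> 'rV[R]_n) : Prop :=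
  forall i j k l, i != j -> k != l -> enorm (v i - v j) = enorm (v k - v l).

Definition inscribed (R : realType) (n : nat) (v : 'I_n.+1 -> 'rV[R]_n) : Prop :=
  forall i, enorm (v i) = 1.

(* Main.v *)
Require Import Defs.
From HB Require Import structures.
From mathcomp Require Import all_boot all_order all_algebra.
From mathcomp Require Import boolp classical_sets reals.
From mathcomp Require Import ring lra.
Import Order.TTheory GRing.Theory Num.Theory.
Local Open Scope ring_scope.
Local Open Scope classical_set_scope.
Set Implicit Arguments. Unset Strict Implicit. Unset Printing Implicit Defensive.

Definition dot (R : realType) (n : nat) (x y : 'rV[R]_n) : R :=
  \sum_i x ord0 i * y ord0 i.

Lemma dotC (R : realType) n (x y : 'rV[R]_n) : dot x y = dot y x.
Proof. by apply: eq_bigr => i _; rewrite mulrC. Qed.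

Lemma dotDl (R : realType) n (x y z : 'rV[R]_n) : dot (x + y) z = dot x z + dot y z.
Proof. by rewrite /dot -big_split; apply: eq_bigr => i _; rewrite !mxE mulrDl. Qed.

Lemma dotZl (R : realType) n a (x z : 'rV[R]_n) : dot (a *: x) z = a * dot x z.
Proof. by rewrite /dot mulr_sumr; apply: eq_bigr => i _; rewrite !mxE mulrA. Qed.

Lemma dotNl (R : realType) n (x z : 'rV[R]_n) : dot (- x) z = - dot x z.
Proof. by rewrite -scaleN1r dotZl mulN1r. Qed.

Lemma dotBl (R : realType) n (x y z : 'rV[R]_n) : dot (x - y) z = dot x z - dot y z.
Proof. by rewrite dotDl dotNl. Qed.

Lemma dot0l (R : realType) n (z : 'rV[R]_n) : dot 0 z = 0.
Proof. by rewrite /dot big1 // => i _; rewrite mxE mul0r. Qed.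

Lemma dot_suml (R : realType) n (I : finType) (f : I -> 'rV[R]_n) z :
  dot (\sum_i f i) z = \sum_i dot (f i) z.
Proof.
elim/big_rec2: _ => [|i y1 y2 _ <-]; first by rewrite dot0l.
by rewrite dotDl.
Qed.

Lemma dotDr (R : realType) n (x y z : 'rV[R]_n) : dot z (x + y) = dot z x + dot z y.
Proof. by rewrite dotC dotDl !(dotC z). Qed.
Lemma dotZr (R : realType) n a (x z : 'rV[R]_n) : dot z (a *: x) = a * dot z x.
Proof. by rewrite dotC dotZl dotC. Qed.
Lemma dotNr (R : realType) n (x z : 'rV[R]_n) : dot z (- x) = - dot z x.
Proof. by rewrite dotC dotNl dotC. Qed.
Lemma dotBr (R : realType) n (x y z : 'rV[R]_n) : dot z (x - y) = dot z x - dot z y.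
Proof. by rewrite dotDr dotNr. Qed.
Lemma dot0r (R : realType) n (z : 'rV[R]_n) : dot z 0 = 0.
Proof. by rewrite dotC dot0l. Qed.
Lemma dot_sumr (R : realType) n (I : finType) (f : I -> 'rV[R]_n) z :
  dot z (\sum_i f i) = \sum_i dot z (f i).
Proof. by rewrite dotC dot_suml; apply: eq_bigr => i _; rewrite dotC. Qed.

Lemma dot_ge0 (R : realType) n (x : 'rV[R]_n) : 0 <= dot x x.
Proof. by apply: sumr_ge0 => i _; rewrite -expr2 sqr_ge0. Qed.

Lemma dot_eq0 (R : realType) n (x : 'rV[R]_n) : dot x x = 0 -> x = 0.
Proof.
move=> /eqP; rewrite psumr_eq0 => [/allP H|i _]; last by rewrite -expr2 sqr_ge0.
apply/rowP => i; rewrite mxE.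
by have := H i (mem_index_enum _); rewrite /= -expr2 sqrf_eq0 => /eqP.
Qed.

Lemma enormE (R : realType) n (x : 'rV[R]_n) : enorm x = Num.sqrt (dot x x).
Proof. by rewrite /enorm /dot; congr Num.sqrt; apply: eq_bigr => i _; rewrite expr2. Qed.

Lemma enorm2 (R : realType) n (x : 'rV[R]_n) : enorm x ^+ 2 = dot x x.
Proof. by rewrite enormE sqr_sqrtr // dot_ge0. Qed.

Lemma enorm_ge0 (R : realType) n (x : 'rV[R]_n) : 0 <= enorm x.
Proof. by rewrite enormE sqrtr_ge0. Qed.

Lemma enorm_le1 (R : realType) n (x : 'rV[R]_n) : dot x x <= 1 -> enorm x <= 1.
Proof. by move=> h; rewrite enormE -sqrtr1 ler_sqrt. Qed.

Lemma dot_le1 (R : realType) n (x : 'rV[R]_n) : enorm x <= 1 -> dot x x <= 1.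
Proof.
move=> h; rewrite -enorm2 -(expr1n _ 2).
by rewrite ler_pXn2r // ?nnegrE ?enorm_ge0.
Qed.

Lemma dot_expand (R : realType) n (g v : 'rV[R]_n) :
  dot (enorm g *: v - g) (enorm g *: v - g) =
  enorm g ^+ 2 * dot v v - 2 * enorm g * dot g v + enorm g ^+ 2.
Proof.
rewrite !(dotBl, dotBr, dotZl, dotZr) (dotC v g) -(enorm2 g).
ring.
Qed.

Lemma dot_le_norm (R : realType) n (g v : 'rV[R]_n) :
  enorm v <= 1 -> dot g v <= enorm g.
Proof.
move=> hv; have h1 := dot_le1 hv.
have h2 := dot_ge0 (enorm g *: v - g); rewrite dot_expand in h2.
have hN := enorm_ge0 g.
have [N0|Npos] := eqVneq (enorm g) 0.
  have : dot g g = 0 by rewrite -enorm2 N0 expr0n.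
  by move/dot_eq0 => ->; rewrite dot0l enorm_ge0.
have Np : 0 < enorm g by rewrite lt_def Npos hN.
nra.
Qed.

Lemma dot_eq_norm (R : realType) n (g v : 'rV[R]_n) :
  enorm v <= 1 -> dot g v = enorm g -> 0 < enorm g ->
  dot v v = 1 /\ enorm g *: v = g.
Proof.
move=> hv he Np; have h1 := dot_le1 hv.
have h2 := dot_ge0 (enorm g *: v - g); rewrite dot_expand he in h2.
have h3 : 0 <= enorm g ^+ 2 * (dot v v - 1) by rewrite mulrBr mulr1 expr2; lra.
rewrite pmulr_rge0 ?exprn_gt0 // subr_ge0 in h3.
have hv1 : dot v v = 1 by apply/le_anti; rewrite h1 h3.
split => //; apply/eqP; rewrite -subr_eq0; apply/eqP/dot_eq0.
rewrite dot_expand he hv1; ring.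
Qed.

Definition Mv (R : realType) n (v : 'I_n.+1 -> 'rV[R]_n) : 'M[R]_n :=
  \matrix_(i < n) (v (lift ord0 i) - v ord0).

Definition gv (R : realType) n (v : 'I_n.+1 -> 'rV[R]_n) (j : 'I_n.+1) : 'rV[R]_n :=
  if unlift ord0 j is Some k then \row_l (invmx (Mv v)) l k
  else - \sum_k \row_l (invmx (Mv v)) l k.

Definition lam (R : realType) n (v : 'I_n.+1 -> 'rV[R]_n) (j : 'I_n.+1) (x : 'rV[R]_n) : R :=
  dot (gv v j) (x - v ord0) + (j == ord0)%:R.

Lemma gv0 (R : realType) n (v : 'I_n.+1 -> 'rV[R]_n) :
  gv v ord0 = - \sum_k \row_l (invmx (Mv v)) l k.
Proof. by rewrite /gv unlift_none. Qed.

Lemma gvS (R : realType) n (v : 'I_n.+1 -> 'rV[R]_n) k :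
  gv v (lift ord0 k) = \row_l (invmx (Mv v)) l k.
Proof. by rewrite /gv liftK. Qed.

Lemma sum_g (R : realType) n (v : 'I_n.+1 -> 'rV[R]_n) : \sum_j gv v j = 0.
Proof.
rewrite big_ord_recl gv0 (eq_bigr _ (fun i _ => gvS v i)).
by rewrite addNr.
Qed.

Lemma lam_sum (R : realType) n (v : 'I_n.+1 -> 'rV[R]_n) x : \sum_j lam v j x = 1.
Proof.
rewrite /lam big_split /= -dot_suml sum_g dot0l add0r.
by rewrite big_ord_recl eqxx big1 ?addr0.
Qed.

Lemma lamE (R : realType) n (v : 'I_n.+1 -> 'rV[R]_n) j x :
  lam v j x = dot (gv v j) x + lam v j 0.
Proof. rewrite /lam !dotBr dot0r; ring. Qed.

Lemma lam_aff (R : realType) n (v : 'I_n.+1 -> 'rV[R]_n) j a b (s : R) :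
  lam v j (a + s *: (b - a)) = lam v j a + s * (lam v j b - lam v j a).
Proof.
rewrite (lamE v j (a + _)) (lamE v j a) (lamE v j b) dotDr dotZr dotBr; ring.
Qed.

Lemma lam_conv (R : realType) n (v : 'I_n.+1 -> 'rV[R]_n) j (mu : 'I_n.+1 -> R) :
  \sum_i mu i = 1 -> lam v j (\sum_i mu i *: v i) = \sum_i mu i * lam v j (v i).
Proof.
move=> hs; rewrite lamE dot_sumr.
have -> : lam v j 0 = \sum_i mu i * lam v j 0 by rewrite -mulr_suml hs mul1r.
rewrite -big_split; apply: eq_bigr => i _ /=.
by rewrite dotZr (lamE v j (v i)) -mulrDr.
Qed.

Lemma lam_key (R : realType) n (v : 'I_n.+1 -> 'rV[R]_n) (hM : Mv v \in unitmx) i k :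
  dot (\row_l (invmx (Mv v)) l k) (v (lift ord0 i) - v ord0) = (i == k)%:R.
Proof.
have := congr1 (fun A : 'M[R]_n => A i k) (mulmxV hM); rewrite !mxE => <-.
by apply: eq_bigr => l _; rewrite !mxE mulrC.
Qed.

Lemma lam_vert (R : realType) n (v : 'I_n.+1 -> 'rV[R]_n) (hM : Mv v \in unitmx) i j :
  lam v j (v i) = (i == j)%:R.
Proof.
rewrite /lam; case: (unliftP ord0 i) => [i'|] ->.
  case: (unliftP ord0 j) => [k|] ->.
    by rewrite gvS lam_key // (inj_eq (@lift_inj _ ord0)) addr0.
  rewrite gv0 dotNl dot_suml.
  under eq_bigr do rewrite lam_key //.
  by rewrite (bigD1 i') //= eqxx big1 ?addr0 ?addNr // => k /negbTE; rewrite eq_sym => ->.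
by rewrite subrr dot0r add0r eq_sym.
Qed.

Lemma lam_decomp (R : realType) n (v : 'I_n.+1 -> 'rV[R]_n) (hM : Mv v \in unitmx) x :
  x = \sum_j lam v j x *: v j.
Proof.
set u := (x - v ord0) *m invmx (Mv v).
have hx : x - v ord0 = \sum_k u ord0 k *: (v (lift ord0 k) - v ord0).
  rewrite -{1}(mulmxKV hM (x - v ord0)) -/u mulmx_sum_row.
  apply: eq_bigr => k _; congr (_ *: _); apply/rowP => l; rewrite !mxE //.
have hu : forall k, u ord0 k = lam v (lift ord0 k) x.
  move=> k; rewrite /lam gvS addr0 /u mxE; apply: eq_bigr => l _; rewrite !mxE mulrC //.
have hs := lam_sum v x; rewrite big_ord_recl in hs.
rewrite big_ord_recl.
have -> : lam v ord0 x = 1 - \sum_k u ord0 k.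
  by rewrite -hs (eq_bigr _ (fun k _ => hu k)) addrK.
under [X in _ = _ + X]eq_bigr do rewrite -hu.
rewrite scalerBl scale1r scaler_suml.
have E : \sum_k u ord0 k *: (v (lift ord0 k) - v ord0) =
  \sum_k u ord0 k *: v (lift ord0 k) - \sum_k u ord0 k *: v ord0.
  by rewrite -sumrB; apply: eq_bigr => k _; rewrite scalerBr.
rewrite E in hx.
have -> : x = v ord0 + (x - v ord0) by rewrite addrC subrK.
by rewrite hx (addrC (\sum_k _)) addrA.
Qed.

Lemma sum_delta (R : realType) m (f : 'I_m -> R) j :
  \sum_i f i * (i == j)%:R = f j.
Proof.
by rewrite (bigD1 j) //= eqxx mulr1 big1 ?addr0 // => i /negbTE ->; rewrite mulr0.
Qed.

Lemma hull_of_lam (R : realType) n (v : 'I_n.+1 -> 'rV[R]_n) (hM : Mv v \in unitmx) y :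
  (forall j, 0 <= lam v j y) -> simplex_hull v y.
Proof.
move=> h; exists (fun j => lam v j y); split => //; split; first exact: lam_sum.
exact: lam_decomp.
Qed.

Lemma hull_lam (R : realType) n (v : 'I_n.+1 -> 'rV[R]_n) (hM : Mv v \in unitmx) y :
  simplex_hull v y -> forall j, 0 <= lam v j y.
Proof.
move=> [mu [h0 [h1 ->]]] j; rewrite lam_conv //.
under eq_bigr do rewrite lam_vert //.
by rewrite sum_delta.
Qed.

Lemma lam_cen (R : realType) n (v : 'I_n.+1 -> 'rV[R]_n) (hM : Mv v \in unitmx) j :
  lam v j (centroid v) = (n.+1)%:R^-1.
Proof.
rewrite /centroid scaler_sumr lam_conv.
  by under eq_bigr do rewrite lam_vert //; rewrite (sum_delta (fun _ => _)).
rewrite sumr_const card_ord -[X in X = 1](mulr_natr ((n.+1)%:R^-1)) mulVf // pnatr_eq0 //.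
Qed.

Lemma in_homo (R : realType) n (v : 'I_n.+1 -> 'rV[R]_n) (hM : Mv v \in unitmx) s x :
  0 <= s -> homothetic s v x -> forall j, (1 - s) / (n.+1)%:R <= lam v j x.
Proof.
move=> s0 [y hy <-] j.
rewrite lam_aff lam_cen //.
have := hull_lam hM hy j.
set c := (n.+1)%:R^-1; set m := lam v j y => hm.
have : 0 <= s * m by apply: mulr_ge0.
rewrite mulrBl mulrBr; lra.
Qed.

Lemma Ninv (R : realType) (N : R) : N^-1 * N ^+ 2 = N.
Proof.
have [->|h] := eqVneq N 0; first by rewrite invr0 mul0r.
by rewrite expr2 mulrA mulVf ?mul1r.
Qed.

Lemma bound_j (R : realType) n (v : 'I_n.+1 -> 'rV[R]_n) (hM : Mv v \in unitmx) s :
  1 <= s -> @unit_ball R n `<=` homothetic s v ->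
  forall j, (1 - s) / (n.+1)%:R <= lam v j 0 - enorm (gv v j).
Proof.
move=> s1 hB j.
set N := enorm (gv v j).
set x := - (N^-1 *: gv v j).
have hx : @unit_ball R n x.
  rewrite /unit_ball /=; apply: enorm_le1.
  rewrite /x dotNl dotNr opprK dotZl dotZr -enorm2 -/N.
  have [->|h] := eqVneq N 0; first by rewrite invr0 !mul0r ler01.
  by rewrite Ninv mulVf.
have := in_homo hM (le_trans ler01 s1) (hB _ hx) j.
by rewrite lamE /x dotNr dotZr -enorm2 -/N Ninv [- N + _]addrC.
Qed.

Lemma ball_neg (R : realType) n (x : 'rV[R]_n) : @unit_ball R n x -> @unit_ball R n (- x).
Proof. by rewrite /unit_ball /= !enormE dotNl dotNr opprK. Qed.

Lemma nonempty_set (R : realType) n (v : 'I_n.+1 -> 'rV[R]_n) (hM : Mv v \in unitmx) :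
  exists s, 1 <= s /\ @unit_ball R n `<=` homothetic s v.
Proof.
set K := \sum_j (enorm (gv v j) + `|lam v j 0|).
have K0 : 0 <= K by apply: sumr_ge0 => j _; rewrite addr_ge0 ?enorm_ge0.
have Kj : forall j, enorm (gv v j) + `|lam v j 0| <= K.
  move=> j; rewrite /K (bigD1 j) //= lerDl; apply: sumr_ge0 => i _.
  by rewrite addr_ge0 ?enorm_ge0.
set s := 1 + (n.+1)%:R * K.
have n0 : 0 < (n.+1)%:R :> R by rewrite ltr0n.
have s1 : 1 <= s by rewrite /s lerDl mulr_ge0 // ltW.
have s0 : 0 < s by apply: lt_le_trans s1.
exists s; split => // x hx.
set c := centroid v.
exists (c + s^-1 *: (x - c)); last first.
  by rewrite -/c [c + s^-1 *: _]addrC addrK scalerA mulfV ?gt_eqF // scale1r addrC subrK.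
apply: hull_of_lam => // j.
rewrite lam_aff lam_cen //.
have hl : - (enorm (gv v j) + `|lam v j 0|) <= lam v j x.
  rewrite (lamE v j x) opprD; apply: lerD.
    by rewrite lerNl -dotNr; apply: dot_le_norm; apply: ball_neg.
  by rewrite lerNl -normrN ler_norm.
have := Kj j.
set a := lam v j x; set c1 := (n.+1)%:R^-1 => hK.
have hc : c1 * (n.+1)%:R = 1 by rewrite mulVf ?gt_eqF.
have hs : s^-1 * s = 1 by rewrite mulVf ?gt_eqF.
have hsc : s * c1 = c1 + K.
  have -> : s * c1 = c1 + (c1 * (n.+1)%:R) * K by rewrite /s; ring.
  by rewrite hc mul1r.
have : 0 <= s^-1 * (s * c1 + a - c1).
  apply: mulr_ge0; first by rewrite invr_ge0 ltW.
  rewrite hsc /a; lra.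
by rewrite -addrA mulrDr mulrA hs mul1r.
Qed.

Lemma vert_hull (R : realType) n (v : 'I_n.+1 -> 'rV[R]_n) (hM : Mv v \in unitmx) j :
  simplex_hull v (v j).
Proof. by apply: hull_of_lam => // i; rewrite lam_vert // ler0n. Qed.

Lemma dot_gv (R : realType) n (v : 'I_n.+1 -> 'rV[R]_n) (hM : Mv v \in unitmx) j :
  dot (gv v j) (v j) = 1 - lam v j 0.
Proof.
have := lamE v j (v j); rewrite lam_vert // eqxx => h.
have e : (true%:R : R) = 1 by [].
by rewrite e in h; rewrite h addrK.
Qed.

Lemma set_bounds (R : realType) n (v : 'I_n.+1 -> 'rV[R]_n) (hM : Mv v \in unitmx)
  (hB : simplex_hull v `<=` @unit_ball R n) s :
  1 <= s -> @unit_ball R n `<=` homothetic s v ->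
  (forall j, 1 + (n.+1)%:R * (enorm (gv v j) - lam v j 0) <= s) /\
  \sum_j enorm (gv v j) <= s /\ n%:R <= s.
Proof.
move=> s1 hs.
have hb := bound_j hM s1 hs.
have n0 : 0 < (n.+1)%:R :> R by rewrite ltr0n.
have hc : (n.+1)%:R^-1 * (n.+1)%:R = 1 :> R by rewrite mulVf ?gt_eqF.
have hb' : forall j, 1 - s <= (n.+1)%:R * (lam v j 0 - enorm (gv v j)).
  move=> j; have := hb j; rewrite -(ler_pM2l n0) mulrCA mulfV ?gt_eqF // mulr1; apply.
split.
  move=> j; have := hb' j; rewrite mulrBr mulrBr; lra.
have hsum : \sum_j enorm (gv v j) <= s.
  have : \sum_(j < n.+1) ((1 - s) / (n.+1)%:R) <= \sum_j (lam v j 0 - enorm (gv v j)).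
    by apply: ler_sum => j _; apply: hb.
  rewrite sumrB lam_sum sumr_const card_ord -[X in X <= _](mulr_natr ((1 - s) / _)).
  rewrite -mulrA hc mulr1; lra.
split => //.
apply: le_trans hsum.
have : \sum_j (1 - lam v j 0) <= \sum_j enorm (gv v j).
  apply: ler_sum => j _; rewrite -dot_gv //; apply: dot_le_norm; apply: hB.
  exact: vert_hull.
rewrite sumrB lam_sum sumr_const card_ord -[in X in X <= _ -> _]mulr_natr mul1r.
by rewrite mulrSr addrK.
Qed.

Lemma xi_nonempty (R : realType) n (v : 'I_n.+1 -> 'rV[R]_n) (hM : Mv v \in unitmx) :
  [set sigma : R | 1 <= sigma /\ @unit_ball R n `<=` homothetic sigma v] !=set0.
Proof. by have [s hs] := nonempty_set hM; exists s. Qed.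

Lemma xi_lb (R : realType) n (v : 'I_n.+1 -> 'rV[R]_n) (hM : Mv v \in unitmx)
  (hB : simplex_hull v `<=` @unit_ball R n) :
  (forall j, 1 + (n.+1)%:R * (enorm (gv v j) - lam v j 0) <= xi v) /\ n%:R <= xi v.
Proof.
split.
  move=> j; apply: lb_le_inf; first exact: xi_nonempty.
  by move=> s [s1 hs]; have [h _] := set_bounds hM hB s1 hs.
apply: lb_le_inf; first exact: xi_nonempty.
by move=> s [s1 hs]; have [_ [_ h]] := set_bounds hM hB s1 hs.
Qed.

Lemma sum_ge1_eq (R : realType) m (p : 'I_m -> R) :
  (forall j, 1 <= p j) -> \sum_j p j = m%:R -> forall j, p j = 1.
Proof.
move=> h hs j.
have : \sum_i (p i - 1) = 0.
  by rewrite sumrB hs sumr_const card_ord subrr.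
move/eqP; rewrite psumr_eq0 => [/allP H|i _]; last by rewrite subr_ge0.
by apply/eqP; rewrite -subr_eq0; apply: H (mem_index_enum _).
Qed.

Lemma xi_eq_reg (R : realType) n (v : 'I_n.+1 -> 'rV[R]_n) (hM : Mv v \in unitmx)
  (hB : simplex_hull v `<=` @unit_ball R n) (hn : (0 < n)%N) :
  xi v = n%:R -> regular_simplex v /\ inscribed v.
Proof.
move=> hxi.
have [h1 _] := xi_lb hM hB; rewrite hxi in h1.
have h2 : forall j, 1 - lam v j 0 <= enorm (gv v j).
  move=> j; rewrite -dot_gv //; apply: dot_le_norm; apply: hB; exact: vert_hull.
set n1 := (n.+1)%:R : R.
have n1E : n1 = n%:R + 1 by rewrite /n1 -natr1.
have m0 : 0 < n%:R :> R by rewrite ltr0n.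
have hp : forall j, 1 <= n1 * lam v j 0.
  move=> j; have := h1 j; have := h2 j; rewrite n1E; nra.
have hs : \sum_j n1 * lam v j 0 = n1 by rewrite -mulr_sumr lam_sum mulr1.
have hc := sum_ge1_eq hp hs.
have hN : forall j, n1 * enorm (gv v j) = n%:R.
  move=> j; have := h1 j; have := h2 j; have := hc j; rewrite n1E; nra.
have hpos : forall j, 0 < enorm (gv v j).
  move=> j; have := hN j; have := enorm_ge0 (gv v j); rewrite n1E; nra.
have hd : forall j, dot (gv v j) (v j) = enorm (gv v j).
  move=> j; rewrite dot_gv //; have := hN j; have := hc j; rewrite n1E; nra.
have hq : forall j, dot (v j) (v j) = 1 /\ enorm (gv v j) *: v j = gv v j.
  move=> j; apply: dot_eq_norm => //; apply: hB; exact: vert_hull.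
have hij : forall i j, i != j -> n%:R * dot (v j) (v i) = -1.
  move=> i j hne.
  have e1 : dot (gv v j) (v i) = - lam v j 0.
    have := lamE v j (v i); rewrite lam_vert // (negbTE hne) => h.
    have e : (false%:R : R) = 0 by [].
    by rewrite e in h; apply/eqP; rewrite -addr_eq0 -h.
  rewrite -(proj2 (hq j)) dotZl in e1.
  have := hN j; have := hc j; rewrite n1E; nra.
have hd2 : forall i j, i != j -> n%:R * dot (v i - v j) (v i - v j) = 2 * n%:R + 2.
  move=> i j hne; rewrite !(dotBl, dotBr) (proj1 (hq i)) (proj1 (hq j)).
  have := hij i j hne; have := hij j i; rewrite eq_sym => /(_ hne).
  rewrite (dotC (v j) (v i)); nra.
split.
  move=> i j k l hij' hkl; rewrite !enormE; congr Num.sqrt.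
  by apply: (mulfI (lt0r_neq0 m0)); rewrite hd2 // hd2.
by move=> j; rewrite enormE (proj1 (hq j)) sqrtr1.
Qed.

Lemma inf_eq (R : realType) (E : set R) a :
  E a -> (forall y, E y -> a <= y) -> inf E = a.
Proof.
move=> Ea hlb; apply/le_anti/andP; split.
  by apply: ge_inf => //; exists a.
by apply: lb_le_inf => //; exists a.
Qed.

Lemma xi_of_set (R : realType) n (v : 'I_n.+1 -> 'rV[R]_n) (hM : Mv v \in unitmx)
  (hB : simplex_hull v `<=` @unit_ball R n) :
  @unit_ball R n `<=` homothetic n%:R v -> (0 < n)%N -> xi v = n%:R.
Proof.
move=> hs hn; apply: inf_eq.
  by split => //; rewrite ler1n.
by move=> y [y1 hy]; have [_ [_ ]] := set_bounds hM hB y1 hy.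
Qed.

Lemma enormN (R : realType) n (x : 'rV[R]_n) : enorm (- x) = enorm x.
Proof. by rewrite !enormE dotNl dotNr opprK. Qed.

Lemma reg_xi (R : realType) n (v : 'I_n.+1 -> 'rV[R]_n) (hM : Mv v \in unitmx)
  (hB : simplex_hull v `<=` @unit_ball R n) (hn : (0 < n)%N) :
  regular_simplex v -> inscribed v -> xi v = n%:R.
Proof.
move=> hreg hins.
have d1 : forall i, dot (v i) (v i) = 1.
  by move=> i; rewrite -enorm2 hins expr1n.
set i1 : 'I_n.+1 := ord_max.
have i10 : i1 != ord0 by rewrite -val_eqE /= -lt0n.
set t := dot (v i1) (v ord0).
have hdot : forall i j, i != j -> dot (v i) (v j) = t.
  move=> i j hij; have := hreg i j i1 ord0 hij i10.
  move=> /(congr1 (fun r => r ^+ 2)); rewrite !enorm2 !(dotBl, dotBr) !d1.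
  rewrite (dotC (v j)) (dotC (v ord0)) -/t; lra.
have t1 : t != 1.
  apply/eqP => ht.
  have : dot (v i1 - v ord0) (v i1 - v ord0) = 0.
    by rewrite !(dotBl, dotBr) !d1 (dotC (v ord0)) -/t ht; ring.
  move/dot_eq0/eqP; rewrite subr_eq0 => /eqP e.
  have := lam_vert hM i1 i1; rewrite e lam_vert // eq_sym (negbTE i10) eqxx.
  by move/eqP; rewrite eq_sym oner_eq0.
have dec : forall y i, dot y (v i) = lam v i y * (1 - t) + t.
  move=> y i; rewrite {1}(lam_decomp hM y) dot_suml (bigD1 i) //= dotZl d1.
  have hs := lam_sum v y; rewrite (bigD1 i) //= in hs.
  rewrite (eq_bigr (fun j => lam v j y * t)); last first.
    by move=> j hj; rewrite dotZl hdot // eq_sym.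
  rewrite -mulr_suml.
  have -> : \sum_(j < n.+1 | j != i) lam v j y = 1 - lam v i y by rewrite -hs addrC addrK.
  ring.
have nt : n%:R * t = -1.
  have h0 : forall i, lam v i 0 * (1 - t) + t = 0 by move=> i; rewrite -dec dot0l.
  have := congr1 (fun f => \sum_i f i) (funext h0) => /=.
  rewrite big_split /= -mulr_suml lam_sum sumr_const card_ord. rewrite big1_eq mulrSr -mulr_natl.
  lra.
have z0 : forall z, (forall i, dot z (v i) = 0) -> z = 0.
  move=> z hz; apply: dot_eq0; rewrite {2}(lam_decomp hM z) dot_sumr big1 // => j _.
  by rewrite dotZr hz mulr0.
have n0 : 0 < n%:R :> R by rewrite ltr0n.
have cen0 : centroid v = 0.
  apply: z0 => i; rewrite dec lam_cen //.
  have hc : (n.+1)%:R^-1 * (n%:R + 1) = 1 :> R by rewrite natr1 mulVf // pnatr_eq0.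
  set c1 := (n.+1)%:R^-1 in hc *.
  have -> : c1 * (1 - t) + t = c1 * (1 + n%:R * t) + (1 - c1 * (n%:R + 1)) * t by ring.
  by rewrite hc subrr mul0r addr0 nt subrr mulr0.
apply: xi_of_set => // x hx.
exists (n%:R^-1 *: x); last by rewrite cen0 !subr0 add0r scalerA mulfV ?gt_eqF // scale1r.
apply: hull_of_lam => // i.
have E := dec (n%:R^-1 *: x) i; rewrite dotZl in E.
have hdx : -1 <= dot x (v i).
  rewrite lerNl -dotNr dotC; have := dot_le_norm (- v i) hx; rewrite enormN hins //.
have hu : n%:R^-1 * n%:R = 1 :> R by rewrite mulVf ?gt_eqF.
move: E hdx hu nt; set l := lam v i _; set u := n%:R^-1; set m := n%:R; set dx := dot x (v i).
move=> E hdx hu nt.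
have : l * (m + 1) = dx + 1.
  have : m * (u * dx) = m * (l * (1 - t) + t) by rewrite E.
  rewrite mulrA (mulrC m) hu mul1r; nra.
nra.
Qed.

Lemma sum_dd (R : realType) m (k j : 'I_m) (al be ga ep : R) :
  \sum_(l < m) (al * (k == l)%:R + be) * (ga * (j == l)%:R + ep) =
  al * ga * (k == j)%:R + al * ep + be * ga + m%:R * be * ep.
Proof.
have e1 : forall (f : 'I_m -> R) (i : 'I_m), \sum_l (i == l)%:R * f l = f i.
  move=> f i; rewrite (bigD1 i) //= eqxx mul1r big1 ?addr0 // => l /negbTE.
  by rewrite eq_sym => ->; rewrite mul0r.
rewrite (eq_bigr (fun l => (k == l)%:R * (al * ga * (j == l)%:R + al * ep)
   + ((j == l)%:R * (be * ga) + be * ep))); last first.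
  by move=> l _; ring.
rewrite big_split /= e1 big_split /= e1 sumr_const card_ord -mulr_natl.
by rewrite (eq_sym j k); ring.
Qed.

Lemma sum_cd (R : realType) m (j : 'I_m) (be ga ep : R) :
  \sum_(l < m) be * (ga * (j == l)%:R + ep) = be * ga + m%:R * be * ep.
Proof.
have := sum_dd j j 0 be ga ep; rewrite (eq_bigr (fun l => be * (ga * (j == l)%:R + ep))).
  by move=> ->; ring.
by move=> l _; rewrite mul0r add0r.
Qed.

Definition ri (R : realType) n : R := (Num.sqrt (n%:R : R))^-1.
Definition aa (R : realType) n : R := Num.sqrt ((n%:R + 1) / (n%:R : R)).
Definition bb (R : realType) n : R := (ri R n - aa R n) / n%:R.

Definition wv (R : realType) n (j : 'I_n.+1) : 'rV[R]_n :=
  if unlift ord0 j is Some k then \row_l (aa R n * (k == l)%:R + bb R n)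
  else \row_l (- ri R n).

Lemma wv0 (R : realType) n : @wv R n ord0 = \row_l (- ri R n).
Proof. by rewrite /wv unlift_none. Qed.
Lemma wvS (R : realType) n k : @wv R n (lift ord0 k) = \row_l (aa R n * (k == l)%:R + bb R n).
Proof. by rewrite /wv liftK. Qed.

Lemma ri2 (R : realType) n : (0 < n)%N -> ri R n ^+ 2 = (n%:R)^-1.
Proof. by move=> hn; rewrite /ri exprVn sqr_sqrtr // ler0n. Qed.
Lemma aa2 (R : realType) n : (0 < n)%N -> aa R n ^+ 2 = (n%:R + 1) / n%:R.
Proof.
move=> hn; rewrite /aa sqr_sqrtr // divr_ge0 // ?addr_ge0 // ler0n.
Qed.
Lemma aa_gt0 (R : realType) n : (0 < n)%N -> 0 < aa R n.
Proof. by move=> hn; rewrite /aa sqrtr_gt0 divr_gt0 // ?ltr0n // ltr_wpDl // ler0n. Qed.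
Lemma ri_gt0 (R : realType) n : (0 < n)%N -> 0 < ri R n.
Proof. by move=> hn; rewrite /ri invr_gt0 sqrtr_gt0 ltr0n. Qed.

Lemma gram (R : realType) n (hn : (0 < n)%N) i j :
  dot (@wv R n i) (@wv R n j) = if i == j then 1 else - (n%:R)^-1.
Proof.
have m0 : (n%:R : R) != 0 by rewrite pnatr_eq0 -lt0n.
have hr := ri2 R hn; have ha := aa2 R hn.
set r := ri R n in hr *; set a := aa R n in ha *; set m := (n%:R : R) in m0 hr ha *.
have hb : bb R n = (r - a) / m by [].
rewrite /dot.
case: (unliftP ord0 i) => [k|] ->; case: (unliftP ord0 j) => [k'|] ->.
- rewrite !wvS; under eq_bigr do rewrite !mxE.
  rewrite sum_dd hb (inj_eq (@lift_inj _ ord0)).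
  case: eqP => _.
    have -> : a * a * 1%:R + a * ((r - a) / m) + (r - a) / m * a + m * ((r - a) / m) * ((r - a) / m)
      = a ^+ 2 + (r ^+ 2 - a ^+ 2) / m by field.
    by rewrite hr ha; field.
  have -> : a * a * 0%:R + a * ((r - a) / m) + (r - a) / m * a + m * ((r - a) / m) * ((r - a) / m)
    = (r ^+ 2 - a ^+ 2) / m by field.
  by rewrite hr ha; field.
- rewrite wvS wv0; under eq_bigr do rewrite !mxE.
  rewrite (eq_bigr (fun l => (- r) * (a * (k == l)%:R + bb R n))); last by move=> l _; rewrite mulrC.
  rewrite sum_cd hb.
  have -> : - r * a + m * - r * ((r - a) / m) = - r ^+ 2 by field.
  by rewrite hr.
- rewrite wvS wv0; under eq_bigr do rewrite !mxE.
  rewrite sum_cd hb.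
  have -> : - r * a + m * - r * ((r - a) / m) = - r ^+ 2 by field.
  by rewrite hr.
- rewrite wv0; under eq_bigr do rewrite !mxE.
  rewrite eqxx sumr_const card_ord -mulr_natl.
  by rewrite -expr2 sqrrN hr mulfV.
Qed.

Lemma wv_ins (R : realType) n (hn : (0 < n)%N) : inscribed (@wv R n).
Proof. by move=> i; rewrite enormE gram // eqxx sqrtr1. Qed.

Lemma wv_reg (R : realType) n (hn : (0 < n)%N) : regular_simplex (@wv R n).
Proof.
move=> i j k l hij hkl; rewrite !enormE; congr Num.sqrt.
by rewrite !(dotBl, dotBr) !gram // !eqxx (negbTE hij) (negbTE hkl) eq_sym (negbTE hij)
  eq_sym (negbTE hkl).
Qed.

Lemma wv_hull (R : realType) n (hn : (0 < n)%N) :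
  simplex_hull (@wv R n) `<=` @unit_ball R n.
Proof.
move=> x [mu [h0 [h1 ->]]]; rewrite /unit_ball /=; apply: enorm_le1.
rewrite dot_suml.
have -> : 1 = \sum_i \sum_j mu i * mu j.
  by rewrite -[1]mul1r -{1}h1 mulr_suml; apply: eq_bigr => i _; rewrite -mulr_sumr h1 mulr1.
apply: ler_sum => i _; rewrite dotZl dot_sumr mulr_sumr; apply: ler_sum => j _.
rewrite dotZr gram // mulrA -[X in _ <= X]mulr1; apply: ler_wpM2l.
  by apply: mulr_ge0.
case: eqP => _ //; rewrite lerNl; apply: le_trans (_ : 0 <= _).
  by rewrite lerN10.
by rewrite invr_ge0 ler0n.
Qed.

Lemma wv_nondeg (R : realType) n (hn : (0 < n)%N) : nondeg_simplex (@wv R n).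
Proof.
change (\det (Mv (@wv R n)) != 0).
have m0 : (n%:R : R) != 0 by rewrite pnatr_eq0 -lt0n.
have a0 := aa_gt0 R hn; have r0 := ri_gt0 R hn.
set a := aa R n in a0 *; set r := ri R n in r0 *; set m := (n%:R : R) in m0 *.
set e := bb R n + r.
have hae : a + m * e = r * (1 + m) by rewrite /e /bb -/a -/r -/m; field.
have hae0 : a + m * e != 0.
  rewrite hae mulf_neq0 ?gt_eqF //; rewrite ltr_wpDr // ?ler0n // ltr01.
set q := - e / (a * (a + m * e)).
have hM : Mv (@wv R n) =
          \matrix_(k, l) (a * (k == l)%:R + e).
  apply/matrixP => k l; rewrite !mxE wvS wv0 !mxE /e -/a -/r; ring.
have hN : (\matrix_(k, l) (a^-1 * (k == l)%:R + q)) *m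
          (\matrix_(k, l) (a * (k == l)%:R + e)) = 1%:M :> 'M[R]_n.
  apply/matrixP => i j; rewrite !mxE.
  under eq_bigr do rewrite !mxE (eq_sym _ j).
  rewrite sum_dd /q.
  have -> : a^-1 * a = 1 by rewrite mulVf ?gt_eqF.
  by rewrite mul1r; case: (i == j) => /=; field; rewrite hae0 (gt_eqF a0).
rewrite hM; apply/negP => /eqP hd.
have := congr1 determinant hN; rewrite det_mulmx hd mulr0 det1 => /eqP.
by rewrite eq_sym oner_eq0.
Qed.

Theorem theorem10p4 (R : realType) (n : nat) (hn : (0 < n)%N) :
  (forall v : 'I_n.+1 -> 'rV[R]_n,
     nondeg_simplex v -> simplex_hull v `<=` @unit_ball R n ->
     n%:R <= xi v /\ (xi v = n%:R <-> regular_simplex v /\ inscribed v))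
  /\ @xi_n R n = n%:R.
Proof.
have hM_of : forall v : 'I_n.+1 -> 'rV[R]_n, nondeg_simplex v -> Mv v \in unitmx.
  by move=> v hv; rewrite unitmxE unitfE.
split.
  move=> v hv hB; have hM := hM_of v hv.
  split; first exact: (proj2 (xi_lb hM hB)).
  split; first exact: xi_eq_reg.
  by move=> [hr hi]; apply: reg_xi.
apply: inf_eq.
  exists (@wv R n); first by split; [exact: wv_nondeg | exact: wv_hull].
  apply: reg_xi => //; [exact: hM_of (wv_nondeg _ hn) | exact: wv_hull | exact: wv_reg | exact: wv_ins].
by move=> y [v [hv hB] <-]; exact: (proj2 (xi_lb (hM_of v hv) hB)).
Qed.
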